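(* Let $(M,d)$ be a metric space and let $X,Y,Z\subseteq M$. Let $\mathcal{N}$ be a $\sigma$-algebra of subsets of $Y$ containing all Borel subsets of $Y$, and let $\nu$ be a measure on $\mathcal{N}$ with $\nu(Y)<+\infty$. Let $\upsilon_Y\in]0,+\infty[$ and assume that $Y$ is upper $\upsilon_Y$-Ahlfors regular with respect to $X\cup Z$. Let $s_1,s_2\in[0,\upsilon_Y[$. If $s_1+s_2=\upsilon_Y$, assume furthermore that $Y$ is strongly upper $\upsilon_Y$-Ahlfors regular with respect to $X\cup Z$. Then there exists a constant $c\in]0,+\infty[$ such that \[ \int_Y\frac{d\nu(y)}{d(x,y)^{s_1}d(y,z)^{s_2}}\leq \begin{cases} c\,\bigl(1+d(x,z)^{\upsilon_Y-(s_1+s_2)}\bigr) & \text{if } (x,z)\in X\times Z,\ s_1+s_2<\upsilon_Y,\\[2pt] c\,\bigl(1+|\log d(x,z)|\bigr) & \text{if } (x,z)\in X\times Z,\ x\neq z,\ s_1+s_2=\upsilon_Y,\\[2pt] c\, d(x,z)^{\upsilon_Y-(s_1+s_2)} & \text{if } (x,z)\in X\times Z,\ x\neq z,\ s_1+s_2>\upsilon_Y. \end{cases} \]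
   Context: For $\xi\in M$, $r>0$, $B(\xi,r)=\{\eta\in M: d(\xi,\eta)<r\}$, and $B(\xi,0)=\emptyset$. For $W\subseteq M$ and $\upsilon\in]0,+\infty[$: $Y$ is upper $\upsilon$-Ahlfors regular with respect to $W$ if there exist $r_0\in]0,+\infty]$ and $c_0\in]0,+\infty[$ such that $\nu(B(x,r)\cap Y)\leq c_0 r^{\upsilon}$ for all $x\in W$ and all $r\in]0,r_0[$. $Y$ is strongly upper $\upsilon$-Ahlfors regular with respect to $W$ if there exist $r_0\in]0,+\infty]$ and $c_0\in]0,+\infty[$ such that $\nu((B(x,r_2)\setminus B(x,r_1))\cap Y)\leq c_0(r_2^{\upsilon}-r_1^{\upsilon})$ for all $x\in W$ and all $r_1,r_2\in[0,r_0[$ with $r_1<r_2$. Integrands of the form $d(x,y)^{-s}$ with $s>0$ are understood as $+\infty$ where $d(x,y)=0$. *)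

(* Defs.v *)
From HB Require Import structures.
From mathcomp Require Import all_boot all_order all_algebra.
From mathcomp Require Import all_classical all_reals all_analysis.
Set Implicit Arguments. Unset Strict Implicit. Unset Printing Implicit Defensive.
Import Order.TTheory GRing.Theory Num.Theory.
Local Open Scope classical_set_scope.
Local Open Scope ring_scope.

Definition is_metric (R : realType) (M : Type) (d : M -> M -> R) : Prop :=
  [/\ (forall x y, 0 <= d x y),
      (forall x y, d x y = 0 <-> x = y),
      (forall x y, d x y = d y x) &
      (forall x y z, d x z <= d x y + d y z)].

Definition dball (R : realType) (M : Type) (d : M -> M -> R) (x : M) (r : R)
  : set M := [set y | d x y < r].

Definition dopen (R : realType) (M : Type) (d : M -> M -> R) (O : set M) : Prop :=
  forall x, O x -> exists2 r : R, 0 < r & dball d x r `<=` O.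

Definition upper_ahlfors (R : realType) (dsp : measure_display)
  (M : measurableType dsp) (d : M -> M -> R) (nu : set M -> \bar R)
  (Y W : set M) (u : R) : Prop :=
  exists r0 : \bar R, (0 < r0)%E /\ exists2 c0 : R, 0 < c0 &
    forall x r, W x -> 0 < r -> (r%:E < r0)%E ->
      (nu (dball d x r `&` Y) <= (c0 * r `^ u)%:E)%E.

Definition strongly_upper_ahlfors (R : realType) (dsp : measure_display)
  (M : measurableType dsp) (d : M -> M -> R) (nu : set M -> \bar R)
  (Y W : set M) (u : R) : Prop :=
  exists r0 : \bar R, (0 < r0)%E /\ exists2 c0 : R, 0 < c0 &
    forall x r1 r2, W x -> 0 <= r1 -> r1 < r2 -> (r2%:E < r0)%E ->
      (nu ((dball d x r2 `\` dball d x r1) `&` Y)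
         <= (c0 * (r2 `^ u - r1 `^ u))%:E)%E.

(* t^{-s} in [0,+oo], with the convention t^{-s} = +oo when t = 0 and s > 0
   (and t^0 = 1). *)
Definition invpow (R : realType) (s t : R) : \bar R :=
  if (0 < s) && (t == 0) then +oo%E else (t `^ (- s))%:E.

(* Main.v *)
Require Import Defs.
From HB Require Import structures.
From mathcomp Require Import all_boot all_order all_algebra.
From mathcomp Require Import all_classical all_reals all_analysis.
From mathcomp Require Import measurable_realfun ring lra.
Import Order.TTheory GRing.Theory Num.Theory.
Local Open Scope classical_set_scope.
Local Open Scope ring_scope.



Lemma le_integral_nm (R : realType) (dsp : measure_display) (T : measurableType dsp)
  (mu : {measure set T -> \bar R}) (D : set T) (f g : T -> \bar R) :
  (forall x, D x -> (0 <= f x)%E) -> (forall x, D x -> (f x <= g x)%E) ->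
  (\int[mu]_(x in D) f x <= \int[mu]_(x in D) g x)%E.
Proof.
move=> f0 fg.
have g0 : forall x, D x -> (0 <= g x)%E.
  by move=> x Dx; exact: le_trans (f0 _ Dx) (fg _ Dx).
rewrite (ge0_integralE _ f0) (ge0_integralE _ g0).
apply: le_ereal_sup => _ [h /= hf <-]; exists h => //= x.
apply: le_trans (hf x) _; rewrite /patch; case: ifP => // /[1!inE] Dx.
exact: fg.
Qed.

Lemma dopen_dball (R : realType) (M : Type) (d : M -> M -> R) x r :
  is_metric d -> dopen d (dball d x r).
Proof.
case=> _ _ _ tri y; rewrite /dball /= => xy.
exists (r - d x y); first by rewrite subr_gt0.
move=> z; rewrite /dball /= => yz.
by apply: le_lt_trans (tri x y z) _; rewrite -ltrBrDl.
Qed.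

Definition BS (R : realType) (M : Type) (d : M -> M -> R) (Y : set M) (w : M)
  (c r : nat -> R) : M -> \bar R :=
  fun y => (\sum_(j <oo) (c j * \1_(dball d w (r j) `&` Y) y)%:E)%E.
Arguments BS {R M}.

Lemma BS_ge0 (R : realType) (M : Type) (d : M -> M -> R) Y w c r y :
  (forall j, 0 <= c j) -> (0 <= BS d Y w c r y)%E.
Proof.
move=> c0; apply: nneseries_ge0 => n _ _.
by rewrite lee_fin mulr_ge0.
Qed.

Lemma BS_ge (R : realType) (M : Type) (d : M -> M -> R) Y w c r y k :
  (forall j, 0 <= c j) -> Y y -> d w y < r k -> ((c k)%:E <= BS d Y w c r y)%E.
Proof.
move=> c0 Yy yk.
apply: le_trans (nneseries_lim_ge k.+1 _); last first.
  by move=> n _ _; rewrite lee_fin mulr_ge0.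
rewrite big_nat_recr //= indicE mem_set ?mulr1; last by split.
rewrite leeDr // sume_ge0 // => n _; rewrite lee_fin mulr_ge0 //.
Qed.

Lemma BS_meas (R : realType) (dsp : measure_display) (M : measurableType dsp)
  (d : M -> M -> R) Y w c r :
  (forall j, 0 <= c j) -> (forall j, measurable (dball d w (r j) `&` Y)) ->
  measurable_fun Y (BS d Y w c r).
Proof.
move=> c0 mB; apply: ge0_emeasurable_sum.
  by move=> k x _ _; rewrite lee_fin mulr_ge0.
move=> k _; apply/measurable_EFinP; apply: measurable_funM => //.
Qed.

Lemma BS_int (R : realType) (dsp : measure_display) (M : measurableType dsp)
  (d : M -> M -> R) (nu : {measure set M -> \bar R}) Y w c r :
  measurable Y ->
  (forall j, 0 <= c j) -> (forall j, measurable (dball d w (r j) `&` Y)) ->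
  (\int[nu]_(y in Y) BS d Y w c r y =
  \sum_(j <oo) (c j)%:E * nu (dball d w (r j) `&` Y `&` Y))%E.
Proof.
move=> mY c0 mB; rewrite /BS integral_nneseries //; last 2 first.
- by move=> k; apply/measurable_EFinP; apply: measurable_funM.
- by move=> k x _; rewrite lee_fin mulr_ge0.
apply: eq_eseriesr => j _.
under eq_integral do rewrite EFinM.
rewrite ge0_integralZl //; last 2 first.
- by apply/measurable_EFinP; exact: measurable_indic.
- by rewrite lee_fin.
by rewrite integral_indic.
Qed.



Lemma nneseries_le_bound (R : realType) (u : nat -> R) (B : R) :
  (forall n, 0 <= u n) -> (forall n, \sum_(j < n) u j <= B) ->
  (\sum_(j <oo) (u j)%:E <= B%:E)%E.
Proof.
move=> u0 uB; apply: lime_le.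
  by apply: is_cvg_ereal_nneg_natsum => n _; rewrite lee_fin.
apply: nearW => n /=; rewrite big_mkord sumEFin lee_fin; exact: uB.
Qed.

Lemma geom_partial (R : realType) (q A : R) n : 0 <= q -> q < 1 -> 0 <= A ->
  \sum_(j < n) A * q ^+ j <= A / (1 - q).
Proof.
move=> q0 q1 A0.
have h : (\sum_(j < n) q ^+ j) * (1 - q) = 1 - q ^+ n.
  elim: n => [|n IH]; first by rewrite big_ord0 mul0r expr0 subrr.
  by rewrite big_ord_recr /= mulrDl IH exprS; ring.
have q1' : 0 < 1 - q by rewrite subr_gt0.
rewrite -mulr_sumr ler_wpM2l //.
rewrite -div1r ler_pdivlMr // h.
by rewrite lerBlDr lerDl exprn_ge0.
Qed.

Lemma BS_bound (R : realType) (dsp : measure_display) (M : measurableType dsp)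
  (d : M -> M -> R) (nu : {measure set M -> \bar R}) Y w (c r m : nat -> R) (B : R) :
  measurable Y ->
  (forall j, 0 <= c j) -> (forall j, measurable (dball d w (r j) `&` Y)) ->
  (forall j, (nu (dball d w (r j) `&` Y) <= (m j)%:E)%E) ->
  (forall n, \sum_(j < n) c j * m j <= B) ->
  (\int[nu]_(y in Y) BS d Y w c r y <= B%:E)%E.
Proof.
move=> mY c0 mB nuB sB; rewrite BS_int //.
have m0 j : 0 <= m j.
  by rewrite -lee_fin; apply: le_trans (nuB j); exact: measure_ge0.
have := @nneseries_le_bound R (fun j => c j * m j) B (fun j => mulr_ge0 (c0 j) (m0 j)) sB.
apply: le_trans.
apply: lee_nneseries; first by move=> j _ _; rewrite mule_ge0 // lee_fin.
move=> j _; by rewrite -setIA setIid EFinM lee_pmul // lee_fin.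
Qed.

Lemma BS_pinfty (R : realType) (M : Type) (d : M -> M -> R) Y w c r y e :
  0 < e -> (forall j, e <= c j) -> Y y -> (forall j, d w y < r j) ->
  BS d Y w c r y = +oo%E.
Proof.
move=> e0 ce Yy yr.
have c0 j : 0 <= c j by apply: le_trans (ce j); exact: ltW.
have H n : ((n%:R * e)%:E <= BS d Y w c r y)%E.
  apply: le_trans (nneseries_lim_ge n _); last first.
    by move=> k _ _; rewrite lee_fin mulr_ge0.
  rewrite sumEFin lee_fin -[n in n%:R]subn0 mulr_natl -sumr_const_nat ler_sum // => k _.
  by rewrite indicE mem_set ?mulr1 //; split; [exact: yr|].
move: H; case: (BS d Y w c r y) => // [x|] H.
  have := H (Num.truncn (x / e)).+1; rewrite lee_fin.
  by rewrite -ler_pdivlMr // leNgt truncnS_gt.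
by have := H 0%N; rewrite mul0r.
Qed.

Lemma global_reg (R : realType) (dsp : measure_display) (M : measurableType dsp)
  (d : M -> M -> R) (nu : {measure set M -> \bar R}) (Y W : set M) (u : R) :
  is_metric d -> measurable Y ->
  (forall O : set M, dopen d O -> measurable (O `&` Y)) ->
  (nu Y < +oo)%E -> 0 < u -> upper_ahlfors d nu Y W u ->
  exists2 C1 : R, 0 < C1 & forall w r, W w -> 0 < r ->
    (nu (dball d w r `&` Y) <= (C1 * r `^ u)%:E)%E.
Proof.
move=> dm mY mO nuY u0 [r0 [r00 [c0 c00 H]]].
have [R0 R00 R0r0] : exists2 R0 : R, 0 < R0 & (R0%:E < r0)%E.
  move: r00; case: r0 {H} => [x| |] //.
    rewrite lte_fin => x0; exists (x / 2); first by rewrite divr_gt0.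
    by rewrite lte_fin ltr_pdivrMr // ltr_pMr // ltr1n.
  by move=> _; exists 1; rewrite ?ltr01 ?ltry.
have nuY0 : (0 <= nu Y)%E by exact: measure_ge0.
set V := fine (nu Y).
have V0 : 0 <= V by rewrite fine_ge0.
have nuYV : nu Y = V%:E by rewrite fineK // ge0_fin_numE.
have R0u : 0 < R0 `^ u by rewrite powR_gt0.
exists (c0 + V / R0 `^ u); first by apply: (lt_le_trans c00); rewrite lerDl divr_ge0 // ltW.
move=> w r Ww r0'.
have ru0 : 0 <= r `^ u by exact: powR_ge0.
have [rR0|R0r] := ltP r R0.
  apply: le_trans (H w r Ww r0' _) _.
    by apply: lt_trans R0r0; rewrite lte_fin.
  by rewrite lee_fin ler_wpM2r // lerDl divr_ge0 // ltW.
have mB : measurable (dball d w r `&` Y) by apply: mO; exact: dopen_dball.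
have := @le_measure _ _ _ nu (dball d w r `&` Y) Y.
rewrite !inE => /(_ mB mY (@subIsetr _ _ _)) h; apply: le_trans h _.
apply: (le_trans (_ : (_ <= V%:E)%E)); first by rewrite le_eqVlt; apply/orP; left; apply/eqP; exact: nuYV.
rewrite lee_fin.
have RR : R0 `^ u <= r `^ u.
  by apply: ge0_ler_powR => //; [exact: ltW|rewrite nnegrE ltW|rewrite nnegrE ltW].
apply: le_trans (_ : V / R0 `^ u * r `^ u <= _); last first.
  by rewrite ler_wpM2r // lerDr ltW.
rewrite mulrAC ler_pdivlMr // ler_wpM2l //.
Qed.



Definition cN (R : realType) (a b l : R) (j : nat) : R :=
  expR (- b * l) * expR (- a * (l - j%:R - 1)).
Definition rN (R : realType) (l : R) (j : nat) : R := expR (l - j%:R + 1).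
Arguments cN {R}. Arguments rN {R}.

Lemma cN_ge0 (R : realType) (a b l : R) j : 0 <= cN a b l j.
Proof. by rewrite /cN mulr_ge0 // expR_ge0. Qed.

Lemma powR_expR (R : realType) (t p : R) : 0 < t -> t `^ p = expR (p * ln t).
Proof. by move=> t0; rewrite /powR gt_eqF. Qed.

Lemma near_pt (R : realType) (M : Type) (d : M -> M -> R) Y w (a b l : R) y :
  0 <= a -> Y y -> 0 < d w y -> d w y < expR l ->
  ((expR (- b * l) * d w y `^ (- a))%:E <= BS d Y w (cN a b l) (rN l) y)%E.
Proof.
move=> a0 Yy t0 tl.
set t := d w y in t0 tl *.
have lt : ln t < l by rewrite -ltr_expR lnK // posrE.
have x0 : 0 <= l - ln t by rewrite subr_ge0 ltW.
have /andP[j1 j2] := truncn_itv x0.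
set j := Num.truncn (l - ln t) in j1 j2.
apply: (le_trans _ (@BS_ge _ _ d Y w (cN a b l) (rN l) y j (@cN_ge0 _ a b l) Yy _)).
  rewrite lee_fin /cN ler_wpM2l ?expR_ge0 // powR_expR // ler_expR.
  rewrite -natr1 in j2; nra.
rewrite /rN -[d w y]lnK ?posrE // ltr_expR -/t; lra.
Qed.

Lemma near_pinfty (R : realType) (M : Type) (d : M -> M -> R) Y w (a b l : R) y :
  0 <= a -> Y y -> d w y = 0 -> BS d Y w (cN a b l) (rN l) y = +oo%E.
Proof.
move=> a0 Yy t0.
apply: (@BS_pinfty _ _ _ _ _ _ _ _ (expR (- b * l) * expR (- a * (l - 1)))).
- by rewrite mulr_gt0 // expR_gt0.
- move=> j; rewrite /cN ler_wpM2l ?expR_ge0 // ler_expR.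
  have : 0 <= j%:R :> R by [].
  nra.
- exact: Yy.
- by move=> j; rewrite t0 /rN expR_gt0.
Qed.

Lemma near_int (R : realType) (dsp : measure_display) (M : measurableType dsp)
  (d : M -> M -> R) (nu : {measure set M -> \bar R}) Y w (C1 u a b l : R) :
  measurable Y -> (forall r, measurable (dball d w r `&` Y)) ->
  (forall r, 0 < r -> (nu (dball d w r `&` Y) <= (C1 * r `^ u)%:E)%E) ->
  0 <= C1 -> 0 <= a -> a < u ->
  (\int[nu]_(y in Y) BS d Y w (cN a b l) (rN l) y <=
    (C1 * expR ((u - a - b) * l + a + u) / (1 - expR (a - u)))%:E)%E.
Proof.
move=> mY mB Hr C10 a0 au.
apply: (@BS_bound R dsp M d nu Y w (cN a b l) (rN l) (fun j => C1 * rN l j `^ u)) => //.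
- exact: cN_ge0.
- by move=> j; apply: Hr; rewrite /rN expR_gt0.
move=> n.
have -> : \sum_(j < n) cN a b l j * (C1 * rN l j `^ u) =
    \sum_(j < n) C1 * expR ((u - a - b) * l + a + u) * expR (a - u) ^+ j.
  apply: eq_bigr => j _; rewrite /cN /rN -expRM -expRM_natl.
  rewrite mulrCA -!expRD -mulrA -expRD; congr (_ * expR _); ring.
apply: geom_partial.
- exact: expR_ge0.
- by rewrite expR_lt1 subr_lt0.
- by rewrite mulr_ge0 // expR_ge0.
Qed.



Definition cF (R : realType) (s l : R) (k : nat) : R := expR (- s * (l + k%:R)).
Arguments cF {R}.
Definition cF2 (R : realType) (N : nat) (s l : R) (k : nat) : R :=
  if (k < N)%N then cF s l k else 0.
Definition rF (R : realType) (l : R) (k : nat) : R := expR (l + k%:R + 1).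
Arguments cF2 {R}. Arguments rF {R}.

Lemma cF_ge0 (R : realType) (s l : R) k : 0 <= cF s l k.
Proof. exact: expR_ge0. Qed.
Lemma cF2_ge0 (R : realType) N (s l : R) k : 0 <= cF2 N s l k.
Proof. by rewrite /cF2; case: ifP => // _; exact: cF_ge0. Qed.

Lemma far_k (R : realType) (t l : R) : expR l <= t ->
  exists k : nat, l + k%:R <= ln t /\ t < rF l k.
Proof.
move=> lt.
have t0 : 0 < t by apply: lt_le_trans lt; exact: expR_gt0.
have x0 : 0 <= ln t - l by rewrite subr_ge0 -ler_expR lnK ?posrE.
have /andP[j1 j2] := truncn_itv x0.
set K := Num.truncn (ln t - l) in j1 j2 *.
rewrite -natr1 in j2.
exists K; split; first lra.
by rewrite /rF -[t in t < _]lnK ?posrE // ltr_expR; lra.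
Qed.

Lemma far_pt (R : realType) (M : Type) (d : M -> M -> R) Y w (s l : R) y :
  0 <= s -> Y y -> expR l <= d w y ->
  ((d w y `^ (- s))%:E <= BS d Y w (cF s l) (rF l) y)%E.
Proof.
move=> s0 Yy lt.
have t0 : 0 < d w y by apply: lt_le_trans lt; exact: expR_gt0.
have [k [k1 k2]] := @far_k _ _ _ lt.
apply: (le_trans _ (@BS_ge _ _ d Y w (cF s l) (rF l) y k (@cF_ge0 _ s l) Yy k2)).
rewrite lee_fin /cF powR_expR // ler_expR; nra.
Qed.

Lemma far2_pt (R : realType) (M : Type) (d : M -> M -> R) Y w (N : nat) (s l : R) y :
  0 <= s -> Y y -> expR l <= d w y ->
  ((d w y `^ (- s))%:E <= BS d Y w (cF2 N s l) (rF l) y + (expR (- s * (l + N%:R)))%:E)%E.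
Proof.
move=> s0 Yy lt.
have t0 : 0 < d w y by apply: lt_le_trans lt; exact: expR_gt0.
have [k [k1 k2]] := @far_k _ _ _ lt.
have [kN|Nk] := ltnP k N.
  apply: le_trans (_ : (_ <= BS d Y w (cF2 N s l) (rF l) y)%E) _; last first.
    by rewrite leeDl // lee_fin expR_ge0.
  apply: (le_trans _ (@BS_ge _ _ d Y w (cF2 N s l) (rF l) y k (@cF2_ge0 _ N s l) Yy k2)).
  rewrite lee_fin /cF2 kN /cF powR_expR // ler_expR; nra.
apply: le_trans (_ : (_ <= (expR (- s * (l + N%:R)))%:E)%E) _; last first.
  by rewrite leeDr // BS_ge0 // => j; exact: cF2_ge0.
have : (N%:R <= k%:R :> R) by rewrite ler_nat.
rewrite lee_fin powR_expR // ler_expR; nra.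
Qed.

Lemma far_int (R : realType) (dsp : measure_display) (M : measurableType dsp)
  (d : M -> M -> R) (nu : {measure set M -> \bar R}) Y w (C1 u s l : R) :
  measurable Y -> (forall r, measurable (dball d w r `&` Y)) ->
  (forall r, 0 < r -> (nu (dball d w r `&` Y) <= (C1 * r `^ u)%:E)%E) ->
  0 <= C1 -> u < s ->
  (\int[nu]_(y in Y) BS d Y w (cF s l) (rF l) y <=
    (C1 * expR ((u - s) * l + u) / (1 - expR (u - s)))%:E)%E.
Proof.
move=> mY mB Hr C10 us.
apply: (@BS_bound R dsp M d nu Y w (cF s l) (rF l) (fun j => C1 * rF l j `^ u)) => //.
- exact: cF_ge0.
- by move=> j; apply: Hr; rewrite /rF expR_gt0.
move=> n.
have -> : \sum_(j < n) cF s l j * (C1 * rF l j `^ u) =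
    \sum_(j < n) C1 * expR ((u - s) * l + u) * expR (u - s) ^+ j.
  apply: eq_bigr => j _; rewrite /cF /rF -expRM -expRM_natl.
  rewrite mulrCA -!expRD -mulrA -expRD; congr (_ * expR _); ring.
apply: geom_partial.
- exact: expR_ge0.
- by rewrite expR_lt1 subr_lt0.
- by rewrite mulr_ge0 // expR_ge0.
Qed.

Lemma far2_int (R : realType) (dsp : measure_display) (M : measurableType dsp)
  (d : M -> M -> R) (nu : {measure set M -> \bar R}) Y w (C1 u l : R) N :
  measurable Y -> (forall r, measurable (dball d w r `&` Y)) ->
  (forall r, 0 < r -> (nu (dball d w r `&` Y) <= (C1 * r `^ u)%:E)%E) ->
  0 <= C1 ->
  (\int[nu]_(y in Y) BS d Y w (cF2 N u l) (rF l) y <=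
    (N%:R * (C1 * expR u))%:E)%E.
Proof.
move=> mY mB Hr C10.
apply: (@BS_bound R dsp M d nu Y w (cF2 N u l) (rF l) (fun j => C1 * rF l j `^ u)) => //.
- exact: cF2_ge0.
- by move=> j; apply: Hr; rewrite /rF expR_gt0.
move=> n.
have E k : cF2 N u l k * (C1 * rF l k `^ u) = if (k < N)%N then C1 * expR u else 0.
  rewrite /cF2; case: ifP => _; last by rewrite mul0r.
  rewrite /cF /rF -expRM mulrCA -expRD; congr (_ * expR _); ring.
under eq_bigr do rewrite E.
have A0 : 0 <= C1 * expR u by rewrite mulr_ge0 // expR_ge0.
suff -> : \sum_(j < n) (if (j < N)%N then C1 * expR u else 0) = (minn n N)%:R * (C1 * expR u).
  by rewrite ler_wpM2r // ler_nat geq_minr.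
elim: n => [|n IH]; first by rewrite big_ord0 min0n mul0r.
rewrite big_ord_recr /= IH.
have [nN|Nn] := ltnP n N.
  by rewrite (minn_idPl nN) -natr1 mulrDl mul1r.
by rewrite (minn_idPr (leqW Nn)) addr0.
Qed.



Lemma int_add (R : realType) (dsp : measure_display) (M : measurableType dsp)
  (nu : {measure set M -> \bar R}) (Y : set M) (g1 g2 : M -> \bar R) (B1 B2 : R) :
  measurable Y -> measurable_fun Y g1 -> measurable_fun Y g2 ->
  (forall y, Y y -> (0 <= g1 y)%E) -> (forall y, Y y -> (0 <= g2 y)%E) ->
  (\int[nu]_(y in Y) g1 y <= B1%:E)%E -> (\int[nu]_(y in Y) g2 y <= B2%:E)%E ->
  (\int[nu]_(y in Y) (g1 y + g2 y) <= (B1 + B2)%:E)%E.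
Proof.
move=> mY m1 m2 p1 p2 i1 i2.
by rewrite ge0_integralD // EFinD leeD.
Qed.

Lemma int_cst (R : realType) (dsp : measure_display) (M : measurableType dsp)
  (nu : {measure set M -> \bar R}) (Y : set M) (k V : R) :
  measurable Y -> nu Y = V%:E ->
  (\int[nu]_(y in Y) (k%:E) = (k * V)%:E)%E.
Proof.
move=> mY nuY.
have := integral_cst nu mY k%:E; rewrite /cst => ->.
by rewrite nuY.
Qed.

Lemma invpow_ge0 (R : realType) (s t : R) : (0 <= invpow s t)%E.
Proof. by rewrite /invpow; case: ifP => _; rewrite ?leey // lee_fin powR_ge0. Qed.

Lemma invpow_pos (R : realType) (s t : R) : 0 < t -> invpow s t = (t `^ (- s))%:E.
Proof. by move=> t0; rewrite /invpow gt_eqF ?andbF. Qed.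

Lemma core1 (R : realType) (a b l t1 t2 : R) :
  0 < t1 -> expR l <= t2 -> 0 <= b ->
  t1 `^ (- a) * t2 `^ (- b) <= expR (- b * l) * t1 `^ (- a).
Proof.
move=> t10 lt2 b0.
have t20 : 0 < t2 by apply: lt_le_trans lt2; exact: expR_gt0.
rewrite mulrC ler_wpM2r ?powR_ge0 // powR_expR // ler_expR.
have : l <= ln t2 by rewrite -ler_expR lnK ?posrE.
nra.
Qed.

Lemma core2 (R : realType) (a b t1 t2 : R) :
  0 < t1 -> t1 <= t2 -> 0 <= b ->
  t1 `^ (- a) * t2 `^ (- b) <= t1 `^ (- (a + b)).
Proof.
move=> t10 t12 b0.
have t20 : 0 < t2 by apply: lt_le_trans t12.
rewrite !powR_expR // -expRD ler_expR.
have : ln t1 <= ln t2 by rewrite ler_ln ?posrE.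
nra.
Qed.

Lemma le_addl_ge0 (R : realType) (x a b : \bar R) : (0 <= b)%E -> (x <= a)%E -> (x <= a + b)%E.
Proof. by move=> b0 xa; apply: le_trans xa _; rewrite leeDl. Qed.
Lemma le_addr_ge0 (R : realType) (x a b : \bar R) : (0 <= a)%E -> (x <= b)%E -> (x <= a + b)%E.
Proof. by move=> a0 xb; apply: le_trans xb _; rewrite leeDr. Qed.

Lemma side1 (R : realType) (M : Type) (d : M -> M -> R) Y w (s : R) y :
  0 <= s -> Y y -> 0 < d w y ->
  ((d w y `^ (- s))%:E <= BS d Y w (cN s 0 0) (rN 0) y + 1%:E)%E.
Proof.
move=> s0 Yy t0.
have [t1|t1] := ltP (d w y) (expR 0).
  apply: le_addl_ge0 => //.
  have := @near_pt R M d Y w s 0 0 y s0 Yy t0 t1.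
  by rewrite mulr0 expR0 mul1r.
apply: le_addr_ge0; first by apply: BS_ge0 => j; exact: cN_ge0.
rewrite lee_fin powR_expR // -expR0 ler_expR.
have : 0 <= ln (d w y) by rewrite -(@expRK R 0) ler_ln ?posrE ?expR_gt0.
nra.
Qed.

Lemma side3 (R : realType) (M : Type) (d : M -> M -> R) Y w (a b l t2 : R) y
  (G : M -> \bar R) :
  0 <= a -> 0 <= b -> Y y -> 0 < d w y -> d w y <= t2 -> expR l <= t2 ->
  (forall y, Y y -> (0 <= G y)%E) ->
  (expR l <= d w y -> ((d w y `^ (- (a + b)))%:E <= G y)%E) ->
  ((d w y `^ (- a) * t2 `^ (- b))%:E <= BS d Y w (cN a b l) (rN l) y + G y)%E.
Proof.
move=> a0 b0 Yy t0 t12 lt2 G0 HG.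
have [t1|t1] := ltP (d w y) (expR l).
  apply: le_addl_ge0; first exact: G0.
  apply: le_trans (@near_pt R M d Y w a b l y a0 Yy t0 t1).
  by rewrite lee_fin core1.
apply: le_addr_ge0; first by apply: BS_ge0 => j; exact: cN_ge0.
apply: le_trans (HG t1).
by rewrite lee_fin core2.
Qed.



Theorem proposition4p1 (R : realType) (dsp : measure_display)
  (M : measurableType dsp) (d : M -> M -> R) (X Y Z : set M)
  (nu : {measure set M -> \bar R}) (uY s1 s2 : R) :
  is_metric d ->
  measurable Y ->
  (forall O : set M, dopen d O -> measurable (O `&` Y)) ->
  (nu Y < +oo)%E ->
  0 < uY ->
  upper_ahlfors d nu Y (X `|` Z) uY ->
  0 <= s1 -> s1 < uY -> 0 <= s2 -> s2 < uY ->
  (s1 + s2 = uY -> strongly_upper_ahlfors d nu Y (X `|` Z) uY) ->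
  exists2 c : R, 0 < c &
    forall x z, X x -> Z z ->
      [/\ (s1 + s2 < uY ->
             (\int[nu]_(y in Y) (invpow s1 (d x y) * invpow s2 (d y z))
               <= (c * (1 + d x z `^ (uY - (s1 + s2))))%:E)%E),
          (x <> z -> s1 + s2 = uY ->
             (\int[nu]_(y in Y) (invpow s1 (d x y) * invpow s2 (d y z))
               <= (c * (1 + `|ln (d x z)|))%:E)%E) &
          (x <> z -> uY < s1 + s2 ->
             (\int[nu]_(y in Y) (invpow s1 (d x y) * invpow s2 (d y z))
               <= (c * d x z `^ (uY - (s1 + s2)))%:E)%E)].
Proof.
move=> dm mY mO nuY u0 Hreg s10 s1u s20 s2u _.
have dm' := dm; case: dm' => [dpos dsep dsym dtri].
have [C1 C10 Hr] := @global_reg R dsp M d nu Y (X `|` Z) uY dm mY mO nuY u0 Hreg.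
have mB : forall w r, measurable (dball d w r `&` Y).
  by move=> w r; apply: mO; exact: dopen_dball.
have nuY0 : (0 <= nu Y)%E by exact: measure_ge0.
set V := fine (nu Y).
have V0 : 0 <= V by rewrite fine_ge0.
have nuYV : nu Y = V%:E by rewrite fineK // ge0_fin_numE.
have f0 x z y : (0 <= invpow s1 (d x y) * invpow s2 (d y z))%E.
  by rewrite mule_ge0 // invpow_ge0.
have fpos x z y : 0 < d x y -> 0 < d y z ->
    (invpow s1 (d x y) * invpow s2 (d y z) = (d x y `^ (- s1) * d y z `^ (- s2))%:E)%E.
  by move=> h1 h2; rewrite !invpow_pos.
have d0 x y : d x y = 0 \/ 0 < d x y.
  by have := dpos x y; rewrite le_eqVlt => /orP[/eqP<-|->]; [left|right].
have BSm w c r : (forall j, 0 <= c j) -> measurable_fun Y (BS d Y w c r).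
  by move=> c0; apply: BS_meas.
have HrW w : (X `|` Z) w -> forall r, 0 < r -> (nu (dball d w r `&` Y) <= (C1 * r `^ uY)%:E)%E.
  by move=> Ww r r0; exact: Hr.
case: (ltgtP (s1 + s2) uY) => [slt|sgt|seq].
- pose KN := C1 * expR ((uY - (s1 + s2) - 0) * 0 + (s1 + s2) + uY) / (1 - expR ((s1 + s2) - uY)).
  have KN0 : 0 < KN.
    by rewrite divr_gt0 ?mulr_gt0 ?expR_gt0 // subr_gt0 expR_lt1 subr_lt0.
  have s0 : 0 <= s1 + s2 by rewrite addr_ge0.
  exists ((KN + 1 * V) + (KN + 1 * V)); first by rewrite mul1r addr_gt0 // ltr_wpDr.
  move=> x z Xx Zz; split => [_|_ h|_ h]; last 2 first.
  + by exfalso; move: slt; rewrite h ltxx.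
  + by [].
  apply: le_trans (_ : (_ <= ((KN + 1 * V) + (KN + 1 * V))%:E)%E) _; last first.
    by rewrite lee_fin ler_peMr ?lerDl ?powR_ge0 //; lra.
  apply: le_trans (@le_integral_nm _ _ _ nu Y _ (fun y =>
     (BS d Y x (cN (s1 + s2) 0 0) (rN 0) y + 1%:E) +
     (BS d Y z (cN (s1 + s2) 0 0) (rN 0) y + 1%:E))%E _ _) _.
  + by move=> y _; exact: f0.
  + move=> y Yy.
    have BSx0 : (0 <= BS d Y x (cN (s1 + s2) 0 0) (rN 0) y)%E.
      by apply: BS_ge0 => j; exact: cN_ge0.
    have BSz0 : (0 <= BS d Y z (cN (s1 + s2) 0 0) (rN 0) y)%E.
      by apply: BS_ge0 => j; exact: cN_ge0.
    have [t1|t1] := d0 x y.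
      apply: le_addl_ge0; first by rewrite adde_ge0.
      apply: le_addl_ge0 => //.
      by rewrite (@near_pinfty R M d Y x (s1 + s2) 0 0 y s0 Yy t1) leey.
    have [t2|t2] := d0 z y.
      apply: le_addr_ge0; first by rewrite adde_ge0.
      apply: le_addl_ge0 => //.
      by rewrite (@near_pinfty R M d Y z (s1 + s2) 0 0 y s0 Yy t2) leey.
    rewrite fpos -?(dsym z y) //.
    have [t12|t21] := leP (d x y) (d z y).
      apply: le_addl_ge0; first by rewrite adde_ge0.
      apply: le_trans (@side1 R M d Y x (s1 + s2) y s0 Yy t1).
      by rewrite lee_fin core2.
    apply: le_addr_ge0; first by rewrite adde_ge0.
    apply: le_trans (@side1 R M d Y z (s1 + s2) y s0 Yy t2).
    by rewrite lee_fin mulrC addrC core2 // ltW.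
  + apply: int_add => //.
    * by apply: emeasurable_funD => //; apply: BSm => j; exact: cN_ge0.
    * by apply: emeasurable_funD => //; apply: BSm => j; exact: cN_ge0.
    * by move=> y _; rewrite adde_ge0 // BS_ge0 // => j; exact: cN_ge0.
    * by move=> y _; rewrite adde_ge0 // BS_ge0 // => j; exact: cN_ge0.
    * apply: int_add => //; first (by apply: BSm => j; exact: cN_ge0).
      - by move=> y _; rewrite BS_ge0 // => j; exact: cN_ge0.
      - exact: (@near_int R dsp M d nu Y x C1 uY (s1 + s2) 0 0 mY (mB x)
          (HrW x (or_introl Xx)) (ltW C10) s0 slt).
      - by rewrite (@int_cst R dsp M nu Y 1 V mY nuYV).
    * apply: int_add => //; first (by apply: BSm => j; exact: cN_ge0).
      - by move=> y _; rewrite BS_ge0 // => j; exact: cN_ge0.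
      - exact: (@near_int R dsp M d nu Y z C1 uY (s1 + s2) 0 0 mY (mB z)
          (HrW z (or_intror Zz)) (ltW C10) s0 slt).
      - by rewrite (@int_cst R dsp M nu Y 1 V mY nuYV).
- pose KN1 := C1 * expR (s1 + uY) / (1 - expR (s1 - uY)).
  pose KN2 := C1 * expR (s2 + uY) / (1 - expR (s2 - uY)).
  pose KF := C1 * expR uY / (1 - expR (uY - (s1 + s2))).
  have KN10 : 0 < KN1.
    by rewrite divr_gt0 ?mulr_gt0 ?expR_gt0 // subr_gt0 expR_lt1 subr_lt0.
  have KN20 : 0 < KN2.
    by rewrite divr_gt0 ?mulr_gt0 ?expR_gt0 // subr_gt0 expR_lt1 subr_lt0.
  have KF0 : 0 < KF.
    by rewrite divr_gt0 ?mulr_gt0 ?expR_gt0 // subr_gt0 expR_lt1 subr_lt0.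
  have s0 : 0 <= s1 + s2 by rewrite addr_ge0.
  exists (expR (- (uY - (s1 + s2)) * ln 2) * ((KN1 + KF) + (KN2 + KF))).
    by rewrite mulr_gt0 ?expR_gt0 // addr_gt0 // addr_gt0.
  move=> x z Xx Zz; split => [//|_ h|xz _]; first by exfalso; move: sgt; rewrite h ltxx.
  have D0 : 0 < d x z.
    by have [/dsep //|//] := d0 x z.
  pose l := ln (d x z / 2).
  have el : expR l = d x z / 2 by rewrite lnK // posrE divr_gt0.
  pose E := expR ((uY - (s1 + s2)) * l).
  apply: le_trans (_ : (_ <= (E * ((KN1 + KF) + (KN2 + KF)))%:E)%E) _; last first.
    rewrite lee_fin le_eqVlt; apply/orP; left; apply/eqP.
    rewrite mulrAC; congr (_ * _).
    rewrite powR_expR // /E -expRD /l ln_div ?posrE //; congr expR; ring.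
  apply: le_trans (@le_integral_nm _ _ _ nu Y _ (fun y =>
     (BS d Y x (cN s1 s2 l) (rN l) y + BS d Y x (cF (s1 + s2) l) (rF l) y) +
     (BS d Y z (cN s2 s1 l) (rN l) y + BS d Y z (cF (s1 + s2) l) (rF l) y))%E _ _) _.
  + by move=> y _; exact: f0.
  + move=> y Yy.
    have Nx0 : (0 <= BS d Y x (cN s1 s2 l) (rN l) y)%E.
      by apply: BS_ge0 => j; exact: cN_ge0.
    have Nz0 : (0 <= BS d Y z (cN s2 s1 l) (rN l) y)%E.
      by apply: BS_ge0 => j; exact: cN_ge0.
    have Fx0 : forall y, (0 <= BS d Y x (cF (s1 + s2) l) (rF l) y)%E.
      by move=> y'; apply: BS_ge0 => j; exact: cF_ge0.
    have Fz0 : forall y, (0 <= BS d Y z (cF (s1 + s2) l) (rF l) y)%E.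
      by move=> y'; apply: BS_ge0 => j; exact: cF_ge0.
    have [t1|t1] := d0 x y.
      apply: le_addl_ge0; first by rewrite adde_ge0.
      apply: le_addl_ge0 => //.
      by rewrite (@near_pinfty R M d Y x s1 s2 l y s10 Yy t1) leey.
    have [t2|t2] := d0 z y.
      apply: le_addr_ge0; first by rewrite adde_ge0.
      apply: le_addl_ge0 => //.
      by rewrite (@near_pinfty R M d Y z s2 s1 l y s20 Yy t2) leey.
    rewrite fpos -?(dsym z y) //.
    have tri : d x z <= d x y + d z y by rewrite (dsym z y) dtri.
    have [t12|t21] := leP (d x y) (d z y).
      apply: le_addl_ge0; first by rewrite adde_ge0.
      apply: (@side3 R M d Y x s1 s2 l (d z y) y) => //.
      * by rewrite el ler_pdivrMr //; lra.
      * by move=> h; apply: far_pt.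
    apply: le_addr_ge0; first by rewrite adde_ge0.
    rewrite mulrC.
    apply: (@side3 R M d Y z s2 s1 l (d x y) y) => //.
    * exact: ltW.
    * by rewrite el ler_pdivrMr //; lra.
    * by move=> h; rewrite addrC; apply: far_pt.
  + have -> : E * ((KN1 + KF) + (KN2 + KF)) =
       (C1 * expR ((uY - s1 - s2) * l + s1 + uY) / (1 - expR (s1 - uY)) +
        C1 * expR ((uY - (s1 + s2)) * l + uY) / (1 - expR (uY - (s1 + s2)))) +
       (C1 * expR ((uY - s2 - s1) * l + s2 + uY) / (1 - expR (s2 - uY)) +
        C1 * expR ((uY - (s1 + s2)) * l + uY) / (1 - expR (uY - (s1 + s2)))).
      have e1 : expR ((uY - s1 - s2) * l + s1 + uY) = E * expR (s1 + uY).
        by rewrite /E -expRD; congr expR; ring.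
      have e2 : expR ((uY - s2 - s1) * l + s2 + uY) = E * expR (s2 + uY).
        by rewrite /E -expRD; congr expR; ring.
      have e3 : expR ((uY - (s1 + s2)) * l + uY) = E * expR uY.
        by rewrite /E -expRD.
      rewrite e1 e2 e3 /KN1 /KN2 /KF; ring.
    apply: int_add => //.
    * by apply: emeasurable_funD; apply: BSm => j; [exact: cN_ge0|exact: cF_ge0].
    * by apply: emeasurable_funD; apply: BSm => j; [exact: cN_ge0|exact: cF_ge0].
    * by move=> y _; rewrite adde_ge0 // BS_ge0 // => j; [exact: cN_ge0|exact: cF_ge0].
    * by move=> y _; rewrite adde_ge0 // BS_ge0 // => j; [exact: cN_ge0|exact: cF_ge0].
    * apply: int_add => //; try (by apply: BSm => j; first [exact: cN_ge0|exact: cF_ge0]).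
      - by move=> y _; rewrite BS_ge0 // => j; exact: cN_ge0.
      - by move=> y _; rewrite BS_ge0 // => j; exact: cF_ge0.
      - exact: (@near_int R dsp M d nu Y x C1 uY s1 s2 l mY (mB x)
          (HrW x (or_introl Xx)) (ltW C10) s10 s1u).
      - exact: (@far_int R dsp M d nu Y x C1 uY (s1 + s2) l mY (mB x)
          (HrW x (or_introl Xx)) (ltW C10) sgt).
    * apply: int_add => //; try (by apply: BSm => j; first [exact: cN_ge0|exact: cF_ge0]).
      - by move=> y _; rewrite BS_ge0 // => j; exact: cN_ge0.
      - by move=> y _; rewrite BS_ge0 // => j; exact: cF_ge0.
      - exact: (@near_int R dsp M d nu Y z C1 uY s2 s1 l mY (mB z)
          (HrW z (or_intror Zz)) (ltW C10) s20 s2u).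
      - exact: (@far_int R dsp M d nu Y z C1 uY (s1 + s2) l mY (mB z)
          (HrW z (or_intror Zz)) (ltW C10) sgt).
- pose KN1 := C1 * expR (s1 + uY) / (1 - expR (s1 - uY)).
  pose KN2 := C1 * expR (s2 + uY) / (1 - expR (s2 - uY)).
  pose A := C1 * expR uY.
  have KN10 : 0 < KN1.
    by rewrite divr_gt0 ?mulr_gt0 ?expR_gt0 // subr_gt0 expR_lt1 subr_lt0.
  have KN20 : 0 < KN2.
    by rewrite divr_gt0 ?mulr_gt0 ?expR_gt0 // subr_gt0 expR_lt1 subr_lt0.
  have A0 : 0 < A by rewrite mulr_gt0 ?expR_gt0.
  have ln20 : 0 <= ln (2 : R) by rewrite ln_ge0 // ler1n.
  pose K0 := KN1 + KN2 + 2 * V.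
  exists (K0 + 2 * A * (ln 2 + 1) + 2 * A).
    rewrite /K0; have := mulr_ge0 (ltW A0) ln20; nra.
  move=> x z Xx Zz; split => [//|xz _|//].
  have D0 : 0 < d x z.
    by have [/dsep //|//] := d0 x z.
  pose l := ln (d x z / 2).
  have el : expR l = d x z / 2 by rewrite lnK // posrE divr_gt0.
  pose N := (Num.truncn (- l)).+1.
  have lN : 0 <= l + N%:R.
    have := truncnS_gt (- l); rewrite /N; lra.
  have Nb : N%:R <= `|ln (d x z)| + ln 2 + 1.
    rewrite /N -natr1 lerD2r.
    have h1 : (Num.truncn (- l))%:R <= `|l|.
      have [lp|ln0] := leP 0 (- l).
        by apply: le_trans (_ : - l <= _); [rewrite truncn_le|rewrite -normrN ler_norm].
      have : (Num.truncn (- l) <= 0)%N by rewrite truncn_le_nat; lra.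
      by rewrite leqn0 => /eqP ->.
    apply: le_trans h1 _.
    rewrite /l ln_div ?posrE //.
    apply: le_trans (ler_normB _ _) _.
    by rewrite (ger0_norm ln20).
  have s0 : 0 <= s1 + s2 by rewrite addr_ge0.
  have u00 : 0 <= uY by exact: ltW.
  apply: le_trans (_ : (_ <= ((KN1 + (N%:R * A + 1 * V)) + (KN2 + (N%:R * A + 1 * V)))%:E)%E) _.
  - apply: le_trans (@le_integral_nm _ _ _ nu Y _ (fun y =>
       (BS d Y x (cN s1 s2 l) (rN l) y + (BS d Y x (cF2 N uY l) (rF l) y + 1%:E)) +
       (BS d Y z (cN s2 s1 l) (rN l) y + (BS d Y z (cF2 N uY l) (rF l) y + 1%:E)))%E _ _) _.
    + by move=> y _; exact: f0.
    + move=> y Yy.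
      have Nx0 : (0 <= BS d Y x (cN s1 s2 l) (rN l) y)%E.
        by apply: BS_ge0 => j; exact: cN_ge0.
      have Nz0 : (0 <= BS d Y z (cN s2 s1 l) (rN l) y)%E.
        by apply: BS_ge0 => j; exact: cN_ge0.
      have Fx0 : forall y, Y y -> (0 <= BS d Y x (cF2 N uY l) (rF l) y + 1%:E)%E.
        by move=> y' _; rewrite adde_ge0 // BS_ge0 // => j; exact: cF2_ge0.
      have Fz0 : forall y, Y y -> (0 <= BS d Y z (cF2 N uY l) (rF l) y + 1%:E)%E.
        by move=> y' _; rewrite adde_ge0 // BS_ge0 // => j; exact: cF2_ge0.
      have HG : forall w, Y y -> expR l <= d w y ->
          ((d w y `^ (- uY))%:E <= BS d Y w (cF2 N uY l) (rF l) y + 1%:E)%E.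
        move=> w _ h; apply: le_trans (@far2_pt R M d Y w N uY l y u00 Yy h) _.
        apply: leeD2l; rewrite lee_fin expR_le1; nra.
      have [t1|t1] := d0 x y.
        apply: le_addl_ge0; first by rewrite adde_ge0 // Fz0.
        apply: le_addl_ge0; first exact: Fx0.
        by rewrite (@near_pinfty R M d Y x s1 s2 l y s10 Yy t1) leey.
      have [t2|t2] := d0 z y.
        apply: le_addr_ge0; first by rewrite adde_ge0 // Fx0.
        apply: le_addl_ge0; first exact: Fz0.
        by rewrite (@near_pinfty R M d Y z s2 s1 l y s20 Yy t2) leey.
      rewrite fpos -?(dsym z y) //.
      have tri : d x z <= d x y + d z y by rewrite (dsym z y) dtri.
      have [t12|t21] := leP (d x y) (d z y).
        apply: le_addl_ge0; first by rewrite adde_ge0 // Fz0.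
        apply: (@side3 R M d Y x s1 s2 l (d z y) y
          (fun y => BS d Y x (cF2 N uY l) (rF l) y + 1%:E)%E) => //.
        * by rewrite el ler_pdivrMr //; lra.
        * by move=> h; rewrite seq; apply: HG.
      apply: le_addr_ge0; first by rewrite adde_ge0 // Fx0.
      rewrite mulrC.
      apply: (@side3 R M d Y z s2 s1 l (d x y) y
        (fun y => BS d Y z (cF2 N uY l) (rF l) y + 1%:E)%E) => //.
      * exact: ltW.
      * by rewrite el ler_pdivrMr //; lra.
      * by move=> h; rewrite addrC seq; apply: HG.
    + have e1 : KN1 = C1 * expR ((uY - s1 - s2) * l + s1 + uY) / (1 - expR (s1 - uY)).
        by rewrite /KN1 -seq; congr (_ * expR _ / _); ring.
      have e2 : KN2 = C1 * expR ((uY - s2 - s1) * l + s2 + uY) / (1 - expR (s2 - uY)).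
        by rewrite /KN2 -seq; congr (_ * expR _ / _); ring.
      apply: int_add => //.
      * apply: emeasurable_funD; first by apply: BSm => j; exact: cN_ge0.
        by apply: emeasurable_funD => //; apply: BSm => j; exact: cF2_ge0.
      * apply: emeasurable_funD; first by apply: BSm => j; exact: cN_ge0.
        by apply: emeasurable_funD => //; apply: BSm => j; exact: cF2_ge0.
      * by move=> y _; rewrite !adde_ge0 // BS_ge0 // => j; first [exact: cN_ge0|exact: cF2_ge0].
      * by move=> y _; rewrite !adde_ge0 // BS_ge0 // => j; first [exact: cN_ge0|exact: cF2_ge0].
      * apply: int_add => //.
        - by apply: BSm => j; exact: cN_ge0.
        - by apply: emeasurable_funD => //; apply: BSm => j; exact: cF2_ge0.
        - by move=> y _; rewrite BS_ge0 // => j; exact: cN_ge0.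
        - by move=> y _; rewrite adde_ge0 // BS_ge0 // => j; exact: cF2_ge0.
        - rewrite e1; exact: (@near_int R dsp M d nu Y x C1 uY s1 s2 l mY (mB x)
            (HrW x (or_introl Xx)) (ltW C10) s10 s1u).
        - apply: int_add => //.
          + by apply: BSm => j; exact: cF2_ge0.
          + by move=> y _; rewrite BS_ge0 // => j; exact: cF2_ge0.
          + exact: (@far2_int R dsp M d nu Y x C1 uY l N mY (mB x)
              (HrW x (or_introl Xx)) (ltW C10)).
          + by rewrite (@int_cst R dsp M nu Y 1 V mY nuYV).
      * apply: int_add => //.
        - by apply: BSm => j; exact: cN_ge0.
        - by apply: emeasurable_funD => //; apply: BSm => j; exact: cF2_ge0.
        - by move=> y _; rewrite BS_ge0 // => j; exact: cN_ge0.
        - by move=> y _; rewrite adde_ge0 // BS_ge0 // => j; exact: cF2_ge0.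
        - rewrite e2; exact: (@near_int R dsp M d nu Y z C1 uY s2 s1 l mY (mB z)
            (HrW z (or_intror Zz)) (ltW C10) s20 s2u).
        - apply: int_add => //.
          + by apply: BSm => j; exact: cF2_ge0.
          + by move=> y _; rewrite BS_ge0 // => j; exact: cF2_ge0.
          + exact: (@far2_int R dsp M d nu Y z C1 uY l N mY (mB z)
              (HrW z (or_intror Zz)) (ltW C10)).
          + by rewrite (@int_cst R dsp M nu Y 1 V mY nuYV).
  - rewrite lee_fin.
    set L := `|ln (d x z)| in Nb *.
    have L0 : 0 <= L by rewrite /L normr_ge0.
    have h1 : N%:R * A <= (L + ln 2 + 1) * A by rewrite ler_wpM2r // ltW.
    have K00 : 0 <= K0 by rewrite /K0; move: (ltW KN10) (ltW KN20) V0; lra.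
    have p1 : 0 <= K0 * L by rewrite mulr_ge0.
    have p2 : 0 <= A * L by rewrite mulr_ge0 // ltW.
    have p3 : 0 <= A * ln 2 * L by rewrite !mulr_ge0 // ltW.
    rewrite /K0 in K00 p1 *; nra.
Qed.
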